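(* Let $\Omega\subset\mathbb{R}^2$ be open and bounded with Lipschitz boundary, let $f\in L^2(\Omega)$ be not identically zero, and for $\lambda_1,\lambda_2>0$ let $(u^*,v^* )\in BV(\Omega)\times L^2(\Omega)$ be an optimal pair for $$\min_{u\in BV(\Omega),\,v\in L^2(\Omega)}\Big\{|Du|(\Omega)+\lambda_1\|v\|_{L^1(\Omega)}+\frac{\lambda_2}{2}\|f-u-v\|_{L^2(\Omega)}^2\Big\}.$$ Then: (1) for fixed finite $\lambda_1$, $|Du^*|(\Omega)\to0$ and $v^*\to0$ in $L^1(\Omega)$ as $\lambda_2\to0$; (2) for fixed finite $\lambda_2$, $|Du^*|(\Omega)\to0$ and $v^*\to f-u^*$ in $L^2(\Omega)$ (i.e. $\|f-u^*-v^*\|_{L^2(\Omega)}\to0$) as $\lambda_1\to0$.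
   Context: $|Du|(\Omega)$ denotes the total variation of $u$ and $BV(\Omega)$ the space of functions of bounded variation; $(u^*,v^* )$ depends on $(\lambda_1,\lambda_2)$. *)

(* Defs.v *)
From HB Require Import structures.
From mathcomp Require Import all_boot all_order all_algebra.
From mathcomp Require Import all_classical all_reals all_analysis.
Set Implicit Arguments. Unset Strict Implicit. Unset Printing Implicit Defensive.
Import Order.TTheory GRing.Theory Num.Theory.
Import numFieldNormedType.Exports.
Local Open Scope classical_set_scope.
Local Open Scope ring_scope.

(* The plane R^2 is modelled as R * R, with the product topology and the
   product Lebesgue measure (lebesgue_measure \x lebesgue_measure). *)
Definition leb2 (R : realType) := ((@lebesgue_measure R) \x (@lebesgue_measure R))%E.

Definition enorm2 (R : realType) (x : R * R) : R := Num.sqrt (x.1 ^+ 2 + x.2 ^+ 2).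

Definition eball2 (R : realType) (c : R * R) (r : R) : set (R * R) :=
  [set y | enorm2 (y.1 - c.1, y.2 - c.2) < r].

Definition bounded2 (R : realType) (O : set (R * R)) : Prop :=
  exists M : R, forall x, O x -> enorm2 x <= M.

Definition lipschitz1 (R : realType) (g : R -> R) : Prop :=
  exists L : R, forall s t, `|g s - g t| <= L * `|s - t|.

Definition rot2 (R : realType) (th : R) (y : R * R) : R * R :=
  (cos th * y.1 - sin th * y.2, sin th * y.1 + cos th * y.2).

(* Lipschitz boundary: near every boundary point, after a rigid motion,
   O is the (strict) epigraph of a Lipschitz function. *)
Definition lipschitz_boundary (R : realType) (O : set (R * R)) : Prop :=
  forall x, (closure O `\` O) x ->
    exists (r : R) (th : R) (g : R -> R),
      0 < r /\ lipschitz1 g /\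
      forall y, eball2 x r y ->
        (O y <-> let z := rot2 th (y.1 - x.1, y.2 - x.2) in g z.1 < z.2).

Definition pd1 (R : realType) (p : R * R -> R) (x : R * R) : R :=
  derive1 (fun t : R => p (t, x.2)) x.1.
Definition pd2 (R : realType) (p : R * R -> R) (x : R * R) : R :=
  derive1 (fun t : R => p (x.1, t)) x.2.

Definition C1_2 (R : realType) (p : R * R -> R) : Prop :=
  (forall x : R * R, derivable (fun t : R => p (t, x.2)) x.1 1 /\
                     derivable (fun t : R => p (x.1, t)) x.2 1) /\
  continuous p /\ continuous (pd1 p) /\ continuous (pd2 p).

(* test fields for the total variation: phi = (p1, p2) in C^1_c(O; R^2),
   with |phi| <= 1 pointwise *)
Definition TV_test (R : realType) (O : set (R * R)) (p1 p2 : R * R -> R) : Prop :=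
  C1_2 p1 /\ C1_2 p2 /\
  compact (closure [set x | p1 x != 0 \/ p2 x != 0]) /\
  closure [set x | p1 x != 0 \/ p2 x != 0] `<=` O /\
  (forall x, enorm2 (p1 x, p2 x) <= 1).

Definition TV (R : realType) (O : set (R * R)) (u : R * R -> R) : \bar R :=
  ereal_sup [set r : \bar R | exists p1 p2, TV_test O p1 p2 /\
     r = (\int[(@leb2 R)]_(x in O) (u x * (pd1 p1 x + pd2 p2 x))%:E)%E].

Definition BV (R : realType) (O : set (R * R)) (u : R * R -> R) : Prop :=
  ((@leb2 R)).-integrable O (EFin \o u) /\ (TV O u < +oo)%E.

Definition L2 (R : realType) (O : set (R * R)) (v : R * R -> R) : Prop :=
  measurable_fun O v /\ (\int[(@leb2 R)]_(x in O) ((v x) ^+ 2)%:E < +oo)%E.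

Definition L1norm (R : realType) (O : set (R * R)) (v : R * R -> R) : \bar R :=
  (\int[(@leb2 R)]_(x in O) (`|v x|)%:E)%E.
Definition L2norm2 (R : realType) (O : set (R * R)) (w : R * R -> R) : \bar R :=
  (\int[(@leb2 R)]_(x in O) ((w x) ^+ 2)%:E)%E.

Definition energy (R : realType) (O : set (R * R)) (f : R * R -> R)
  (l1 l2 : R) (u v : R * R -> R) : \bar R :=
  (TV O u + l1%:E * L1norm O v + (l2 / 2)%:E * L2norm2 O (fun x => (f x - u x - v x)%R))%E.

Definition optimal_pair (R : realType) (O : set (R * R)) (f : R * R -> R)
  (l1 l2 : R) (u v : R * R -> R) : Prop :=
  BV O u /\ L2 O v /\
  forall u' v', BV O u' -> L2 O v' -> (energy O f l1 l2 u v <= energy O f l1 l2 u' v')%E.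

(* Main.v *)
Require Import Defs.
From HB Require Import structures.
From mathcomp Require Import all_boot all_order all_algebra.
From mathcomp Require Import all_classical all_reals all_analysis.
From mathcomp Require Import lra ring measurable_realfun.
Import Order.TTheory GRing.Theory Num.Theory.
Import numFieldNormedType.Exports.
Local Open Scope classical_set_scope.
Local Open Scope ring_scope.
Section S.
Context {R : realType}.

Lemma pd0 : pd1 (fun _ : R * R => 0 : R) = (fun _ => 0) /\ pd2 (fun _ : R * R => 0 : R) = (fun _ => 0).
Proof. split; apply/funext => x; rewrite /pd1 /pd2; exact: derive1_cst. Qed.

Lemma test0 (O : set (R*R)) : TV_test O (fun _ => 0) (fun _ => 0).
Proof.
have [h1 h2] := pd0.
have C : C1_2 (fun _ : R * R => 0 : R).
  split; first by move=> x; split; exact: derivable_cst.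
  by rewrite h1 h2; split; [|split]; exact: cst_continuous.
have e : [set x : R * R | (0:R) != 0 \/ (0:R) != 0] = set0.
  by apply/seteqP; split => x // /= [] /negP; rewrite eqxx.
split=> //; split=> //; rewrite e closure0; split; first exact: compact0.
split=> // x; rewrite /enorm2 /= expr0n /= addr0 sqrtr0; exact: ler01.
Qed.

Lemma TV_ge0 (O : set (R*R)) u : (0 <= TV O u)%E.
Proof.
apply: ereal_sup_ubound; exists (fun _ => 0), (fun _ => 0); split; first exact: test0.
have [h1 h2] := pd0.
by rewrite h1 h2 integral0_eq // => x _; rewrite addr0 mulr0.
Qed.

Lemma TV0 (O : set (R*R)) : TV O (fun _ => 0) = 0%E.
Proof.
apply/eqP; rewrite eq_le TV_ge0 andbT.
apply: ub_ereal_sup => r [p1 [p2 [_ ->]]].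
by rewrite integral0_eq // => x _; rewrite mul0r.
Qed.

Lemma L1_ge0 (O : set (R*R)) v : (0 <= L1norm O v)%E.
Proof. by apply: integral_ge0 => x _; rewrite lee_fin. Qed.

Lemma L2_ge0 (O : set (R*R)) v : (0 <= L2norm2 O v)%E.
Proof. by apply: integral_ge0 => x _; rewrite lee_fin sqr_ge0. Qed.

Lemma BV0 (O : set (R*R)) : BV O (fun _ => 0).
Proof. split; first exact: integrable0. by rewrite TV0 ltry. Qed.

Lemma L20 (O : set (R*R)) : L2 O (fun _ => 0).
Proof.
split; first exact: measurable_cst.
by rewrite integral0_eq ?ltry // => x _; rewrite expr0n.
Qed.

Lemma L2norm2_0 (O : set (R*R)) w : (forall x, w x = 0) -> L2norm2 O w = 0%E.
Proof. by move=> h; rewrite /L2norm2 integral0_eq // => x _; rewrite h expr0n. Qed.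

Lemma L1norm_0 (O : set (R*R)) : L1norm O (fun _ => 0) = 0%E.
Proof. by rewrite /L1norm integral0_eq // => x _; rewrite normr0. Qed.

Lemma sum3_le (a b c : \bar R) x : (0 <= a)%E -> (0 <= b)%E -> (0 <= c)%E ->
  (a + b + c <= x)%E -> [/\ (a <= x)%E, (b <= x)%E & (c <= x)%E].
Proof.
move=> a0 b0 c0 h; split; apply: le_trans h.
- by rewrite -addeA leeDl // adde_ge0.
- by rewrite addeAC leeDr // adde_ge0.
- by rewrite leeDr // adde_ge0.
Qed.

Lemma scale_le (k : R) (L : \bar R) (X : R) : 0 < k -> (0 <= L)%E ->
  (k%:E * L <= X%:E)%E -> (L <= (X / k)%:E)%E.
Proof.
move=> k0; case: L => [r| |] //.
- rewrite !lee_fin => r0 h; rewrite ler_pdivlMr //; rewrite mulrC; exact: h.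
- by rewrite gt0_muley ?lte_fin.
Qed.

Lemma lim0 (g : R -> \bar R) (K : R) :
  (forall l, 0 < l -> (0 <= g l)%E /\ (g l <= (K * l)%:E)%E) ->
  g l @[l --> 0^'+] --> 0%E.
Proof.
move=> h.
apply: (@squeeze_cvge _ _ _ _ (cst 0%E) _ (fun l => (K * l)%:E)).
- near=> l.
  have l0 : 0 < l by near: l; exact: nbhs_right_gt.
  by have [h1 h2] := h l l0; rewrite /cst h1 h2.
- exact: cvg_cst.
- apply/fine_cvgP; split; first by near=> l.
  rewrite /comp /=.
  rewrite -[X in _ --> X](mulr0 K).
  apply: cvgMr; apply: cvg_at_right_filter; exact: cvg_id.
Unshelve. all: end_near.
Qed.

Lemma openmeas (O : set (R*R)) : open O -> measurable O.
Proof.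
move=> oO.
have -> : O = \bigcup_(a : rat) \bigcup_(b : rat) \bigcup_(c : rat) \bigcup_(d : rat)
  ((`]ratr a, ratr c[ `*` `]ratr b, ratr d[) `&` (fun _ => `]ratr a, ratr c[ `*` `]ratr b, ratr d[ `<=` O)).
  apply/seteqP; split; last first.
    by move=> x [a _ [b _ [c _ [d _ [Hx H]]]]]; exact: H.
  move=> x Ox.
  have := oO x Ox. move=> /nbhs_ballP[e /= e0 ball_sub].
  have [a ha] : exists a : rat, ratr a \in `]x.1 - e, x.1[ by apply: rat_in_itvoo; rewrite ltrBlDr ltrDl.
  have [c hc] : exists a : rat, ratr a \in `]x.1, x.1 + e[ by apply: rat_in_itvoo; rewrite ltrDl.
  have [b hb] : exists a : rat, ratr a \in `]x.2 - e, x.2[ by apply: rat_in_itvoo; rewrite ltrBlDr ltrDl.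
  have [d hd] : exists a : rat, ratr a \in `]x.2, x.2 + e[ by apply: rat_in_itvoo; rewrite ltrDl.
  move: ha hb hc hd; rewrite !in_itv /= => /andP[a1 a2] /andP[b1 b2] /andP[c1 c2] /andP[d1 d2].
  have sub : `]ratr a, ratr c[ `*` `]ratr b, ratr d[ `<=` O.
    move=> y [/= y1 y2]; apply: ball_sub.
    move: y1 y2; rewrite !in_itv /= => /andP[y11 y12] /andP[y21 y22].
    split => /=; rewrite /ball /= ltr_norml; apply/andP; split; lra.
  exists a => //; exists b => //; exists c => //; exists d => //.
  split => //; split; rewrite /= in_itv /=; apply/andP; split => //.
apply: bigcupT_measurable_rat => a0.
apply: bigcupT_measurable_rat => b0.
apply: bigcupT_measurable_rat => c0.
apply: bigcupT_measurable_rat => d0.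
set B := `]ratr a0, ratr c0[ `*` `]ratr b0, ratr d0[.
have [H|H] := pselect (B `<=` O).
  have -> : B `&` (fun _ => B `<=` O) = B.
    by apply/seteqP; split => y; [case|move=> ?; split].
  apply: measurableX; exact: measurable_itv.
have -> : B `&` (fun _ => B `<=` O) = set0.
  by apply/seteqP; split => y; [case|].
exact: measurable0.
Qed.

Lemma finO (O : set (R*R)) : measurable O -> bounded2 O -> (leb2 O < +oo)%E.
Proof.
move=> mO [M HM].
set B := `]-(`|M|+1), `|M|+1[%classic : set R.
have sub : O `<=` B `*` B.
  move=> x /HM; rewrite /enorm2 => h.
  have h1 : `|x.1| <= Num.sqrt (x.1 ^+ 2 + x.2 ^+ 2).
    by rewrite -sqrtr_sqr ler_sqrt ?addr_ge0 ?sqr_ge0 // lerDl sqr_ge0.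
  have h2 : `|x.2| <= Num.sqrt (x.1 ^+ 2 + x.2 ^+ 2).
    by rewrite -sqrtr_sqr ler_sqrt ?addr_ge0 ?sqr_ge0 // lerDr sqr_ge0.
  have hM : M <= `|M| := ler_norm M.
  split; rewrite /B /= in_itv /=; apply/andP; split.
  - move: h1; rewrite ler_norml => /andP[? ?]; lra.
  - move: h1; rewrite ler_norml => /andP[? ?]; lra.
  - move: h2; rewrite ler_norml => /andP[? ?]; lra.
  - move: h2; rewrite ler_norml => /andP[? ?]; lra.
have mB : measurable B by exact: measurable_itv.
apply: (le_lt_trans (@le_measure _ _ _ (@leb2 R) O (B `*` B) _ _ sub)).
- by rewrite inE.
- by rewrite inE; apply: measurableX.
change (((@lebesgue_measure R) \x (@lebesgue_measure R))%E (B `*` B) < +oo)%E.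
rewrite product_measure1E //.
change ((@lebesgue_measure R B * @lebesgue_measure R B < +oo)%E).
rewrite /B lebesgue_measure_itv /= ifT; last by rewrite lte_fin; have := normr_ge0 M; lra.
by rewrite -EFinD -EFinM ltry.
Qed.


Lemma abs_le r : `|r| <= 1 + r ^+ 2 :> R.
Proof.
have h := sqr_ge0 (`|r| - 1).
have e : `|r| ^+ 2 = r ^+ 2 by rewrite real_normK // num_real.
nra.
Qed.

Lemma L1fin (O : set (R*R)) f : measurable O -> (leb2 O < +oo)%E -> L2 O f ->
  (L1norm O f < +oo)%E.
Proof.
move=> mO fin [mf f2].
rewrite /L1norm.
apply: (le_lt_trans (@ge0_le_integral _ _ _ (@leb2 R) _ mO _ (fun x => (1 + f x ^+ 2)%:E) _ _ _ _)).
- by move=> x _; rewrite lee_fin.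
- apply/measurable_EFinP; exact: (measurableT_comp (@normr_measurable R setT) mf).
- apply/measurable_EFinP; apply: measurable_funD; first exact: measurable_cst.
  exact: measurable_funX.
- by move=> x _; rewrite lee_fin abs_le.
under eq_integral => x _ do rewrite EFinD.
rewrite ge0_integralD //; last 2 first.
- by move=> x _; rewrite lee_fin sqr_ge0.
- apply/measurable_EFinP; exact: measurable_funX.
rewrite integral_cst // mul1e -ge0_fin_numE; last first.
  by apply: adde_ge0; [exact: measure_ge0 | apply: integral_ge0 => x _; rewrite lee_fin sqr_ge0].
rewrite fin_numD !ge0_fin_numE //.
- exact/andP.
- by apply: integral_ge0 => x _; rewrite lee_fin sqr_ge0.
Qed.
End S.

Theorem corollary5p1 (R : realType) (O : set (R * R)) (f : R * R -> R) :
  open O -> bounded2 O -> lipschitz_boundary O ->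
  L2 O f -> ~ {ae (@leb2 R), forall x, O x -> f x = 0} ->
  (forall (l1 : R), 0 < l1 ->
     forall sel : R -> (R * R -> R) * (R * R -> R),
       (forall l2 : R, 0 < l2 -> optimal_pair O f l1 l2 (sel l2).1 (sel l2).2) ->
       (TV O (sel l2).1 @[l2 --> 0^'+] --> 0%E) /\
       (L1norm O (sel l2).2 @[l2 --> 0^'+] --> 0%E)) /\
  (forall (l2 : R), 0 < l2 ->
     forall sel : R -> (R * R -> R) * (R * R -> R),
       (forall l1 : R, 0 < l1 -> optimal_pair O f l1 l2 (sel l1).1 (sel l1).2) ->
       (TV O (sel l1).1 @[l1 --> 0^'+] --> 0%E) /\
       (L2norm2 O (fun x => f x - (sel l1).1 x - (sel l1).2 x) @[l1 --> 0^'+] --> 0%E)).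
Proof.
move=> oO bO _ f2 _.
have mO := @openmeas R O oO.
have finO := @finO R O mO bO.
split.
- move=> l1 l10 sel hsel.
  have [c Lf] : exists c : R, L2norm2 O f = c%:E.
    exists (fine (L2norm2 O f)); rewrite fineK // ge0_fin_numE //; last exact: L2_ge0.
    exact: f2.2.
  have key : forall l2, 0 < l2 ->
     [/\ (TV O (sel l2).1 <= ((l2 / 2) * c)%:E)%E,
         (l1%:E * L1norm O (sel l2).2 <= ((l2 / 2) * c)%:E)%E &
         (0 <= TV O (sel l2).1)%E /\ (0 <= L1norm O (sel l2).2)%E].
    move=> l2 l20; have [_ [_ H]] := hsel l2 l20.
    have := H _ _ (BV0 O) (L20 O).
    have -> : energy O f l1 l2 (fun _ => 0) (fun _ => 0) = ((l2 / 2) * c)%:E.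
      rewrite /energy TV0 L1norm_0 mule0.
      have -> : (fun x => f x - 0 - 0) = f by apply/funext => x; rewrite !subr0.
      by rewrite Lf -EFinM !add0e.
    rewrite /energy => /sum3_le [] //.
    + exact: TV_ge0.
    + by apply: mule_ge0; [rewrite lee_fin ltW|exact: L1_ge0].
    + by apply: mule_ge0; [rewrite lee_fin divr_ge0 // ltW|exact: L2_ge0].
    move=> h1 h2 _; split => //; split; [exact: TV_ge0|exact: L1_ge0].
  split.
  + apply: (@lim0 _ _ (c / 2)) => l l0; have [h1 _ [h3 _]] := key l l0.
    split => //; apply: (le_trans h1); rewrite lee_fin le_eqVlt; apply/orP; left.
    apply/eqP; ring.
  + apply: (@lim0 _ _ (c / 2 / l1)) => l l0; have [_ h2 [_ h4]] := key l l0.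
    split => //; apply: (le_trans (scale_le _ _ _ l10 h4 h2)).
    rewrite lee_fin le_eqVlt; apply/orP; left; apply/eqP.
    ring.
- move=> l2 l20 sel hsel.
  have [d Lf] : exists d : R, L1norm O f = d%:E.
    exists (fine (L1norm O f)); rewrite fineK // ge0_fin_numE //; last exact: L1_ge0.
    exact: L1fin.
  have l220 : 0 < l2 / 2 by rewrite divr_gt0.
  have key : forall l1, 0 < l1 ->
     [/\ (TV O (sel l1).1 <= (l1 * d)%:E)%E,
         ((l2 / 2)%:E * L2norm2 O (fun x => (f x - (sel l1).1 x - (sel l1).2 x)%R) <= (l1 * d)%:E)%E &
         (0 <= TV O (sel l1).1)%E /\ (0 <= L2norm2 O (fun x => (f x - (sel l1).1 x - (sel l1).2 x)%R))%E].
    move=> l1 l10; have [_ [_ H]] := hsel l1 l10.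
    have := H _ _ (BV0 O) f2.
    have -> : energy O f l1 l2 (fun _ => 0) f = (l1 * d)%:E.
      rewrite /energy TV0 Lf L2norm2_0; last by move=> x; rewrite subr0 subrr.
      by rewrite mule0 adde0 add0e -EFinM.
    rewrite /energy => /sum3_le [] //.
    + exact: TV_ge0.
    + by apply: mule_ge0; [rewrite lee_fin ltW|exact: L1_ge0].
    + by apply: mule_ge0; [rewrite lee_fin ltW|exact: L2_ge0].
    move=> h1 _ h3; split => //; split; [exact: TV_ge0|exact: L2_ge0].
  split.
  + apply: (@lim0 _ _ d) => l l0; have [h1 _ [h3 _]] := key l l0.
    split => //; apply: (le_trans h1); by rewrite lee_fin mulrC.
  + apply: (@lim0 _ _ (d / (l2 / 2))) => l l0; have [_ h2 [_ h4]] := key l l0.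
    split => //; apply: (le_trans (scale_le _ _ _ l220 h4 h2)).
    rewrite lee_fin (_ : l * d / (l2 / 2) = d / (l2 / 2) * l) //; ring.
Qed.
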